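(* Consider $N$ agents with dynamics $p_i^{(k+1)}=p_i^{(k)}+v_i^{(k)}$, $v_i^{(k+1)}=v_i^{(k)}+u_i^{(k)}$ and control law $u_i^{(k)}=\sum_{j}\gamma_1a_{ij}^{(k)}(p_j^{(k)}-p_i^{(k)})+\gamma_2a_{ij}^{(k)}(v_j^{(k)}-v_i^{(k)})$. Let $\mathcal{A}^{(0)}=(a_{ij}^{(0)})$ be a symmetric nonnegative matrix with zero diagonal whose graph is connected, and assume $\gamma_2>\gamma_1>0$ and $\gamma_1-2\gamma_2>-4/\mu_i^{(0)}$ for every nonzero eigenvalue $\mu_i^{(0)}$ of the Laplacian $L^{(0)}$ of $\mathcal{A}^{(0)}$. Then there exists $\delta_A>0$ with $\delta_A<\min\{a_{ij}^{(0)}: a_{ij}^{(0)}>0\}$ such that the following holds: if for every $k\ge0$ and every edge $\{i,j\}$ (i.e. $a_{ij}^{(0)}>0$) the weight is $a_{ij}^{(k)}=a_{ji}^{(k)}=\alpha_{i,j}^{(k)}\alpha_{j,i}^{(k)}$ for arbitrary numbers $\alpha_{i,j}^{(k)},\alpha_{j,i}^{(k)}\in\big(\sqrt{a_{ij}^{(0)}-\delta_A},\sqrt{a_{ij}^{(0)}+\delta_A}\big)$, and $a_{ij}^{(k)}=0$ for non-edges, then the agents reach consensus for every initial condition: $p_i^{(k)}-p_j^{(k)}\to0$ and $v_i^{(k)}-v_j^{(k)}\to0$ as $k\to\infty$ for all $i,j$.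
   Context: The Laplacian $L=(l_{ij})$ of a symmetric nonnegative matrix $\mathcal{A}=(a_{ij})$ with zero diagonal is $l_{ij}=-a_{ij}$ for $i\neq j$, $l_{ii}=\sum_{j\neq i}a_{ij}$. The factorization of each weight into two random factors, each held privately by one endpoint, models the decoupled-weight scheme used together with Paillier encryption; the values of the factors may be arbitrary within the stated intervals. *)

(* Defs.v *)
From Stdlib Require Import Reals Lra Arith.
Open Scope R_scope.

Fixpoint rsum (n : nat) (f : nat -> R) : R :=
  match n with
  | O => 0
  | S m => rsum m f + f m
  end.

Definition laplacian (N : nat) (A : nat -> nat -> R) (i j : nat) : R :=
  if Nat.eq_dec i j
  then rsum N (fun l => if Nat.eq_dec l i then 0 else A i l)
  else - A i j.

(* mu is an eigenvalue of the N x N matrix M (real eigenvector; M symmetric). *)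
Definition is_eigenvalue (N : nat) (M : nat -> nat -> R) (mu : R) : Prop :=
  exists x : nat -> R,
    (exists i, (i < N)%nat /\ x i <> 0) /\
    forall i, (i < N)%nat -> rsum N (fun j => M i j * x j) = mu * x i.

Inductive reach (N : nat) (A : nat -> nat -> R) (i : nat) : nat -> Prop :=
  | reach_refl : (i < N)%nat -> reach N A i i
  | reach_step : forall j k, reach N A i j -> (k < N)%nat -> A j k > 0 -> reach N A i k.

Definition connected (N : nat) (A : nat -> nat -> R) : Prop :=
  forall i j, (i < N)%nat -> (j < N)%nat -> reach N A i j.

(* Main.v *)
Require Import Defs.
From Stdlib Require Import Reals Lra Lia Psatz Classical ClassicalEpsilon.
Open Scope R_scope.

Lemma rsum_ext n f g : (forall i, (i < n)%nat -> f i = g i) -> rsum n f = rsum n g.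
Proof.
induction n; intros H; simpl; [reflexivity|].
rewrite IHn by (intros; apply H; lia). rewrite H by lia. reflexivity.
Qed.

Lemma rsum_plus n f g : rsum n (fun i => f i + g i) = rsum n f + rsum n g.
Proof. induction n; simpl; [ring|]. rewrite IHn. ring. Qed.

Lemma rsum_minus n f g : rsum n (fun i => f i - g i) = rsum n f - rsum n g.
Proof. induction n; simpl; [ring|]. rewrite IHn. ring. Qed.

Lemma rsum_scal_l n c f : rsum n (fun i => c * f i) = c * rsum n f.
Proof. induction n; simpl; [ring|]. rewrite IHn. ring. Qed.

Lemma rsum_scal_r n c f : rsum n (fun i => f i * c) = rsum n f * c.
Proof. induction n; simpl; [ring|]. rewrite IHn. ring. Qed.

Lemma rsum_zero n : rsum n (fun _ => 0) = 0.
Proof. induction n; simpl; [ring|]. rewrite IHn. ring. Qed.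

Lemma rsum_const n c : rsum n (fun _ => c) = INR n * c.
Proof. induction n; simpl rsum; [simpl; ring|]. rewrite IHn, S_INR. ring. Qed.

Lemma rsum_nonneg n f : (forall i, (i < n)%nat -> 0 <= f i) -> 0 <= rsum n f.
Proof.
induction n; intros H; simpl; [lra|].
assert (0 <= rsum n f) by (apply IHn; intros; apply H; lia).
assert (0 <= f n) by (apply H; lia). lra.
Qed.

Lemma rsum_le n f g : (forall i, (i < n)%nat -> f i <= g i) -> rsum n f <= rsum n g.
Proof.
induction n; intros H; simpl; [lra|].
assert (rsum n f <= rsum n g) by (apply IHn; intros; apply H; lia).
assert (f n <= g n) by (apply H; lia). lra.
Qed.

Lemma rsum_swap n m (f : nat -> nat -> R) :
  rsum n (fun i => rsum m (fun j => f i j)) = rsum m (fun j => rsum n (fun i => f i j)).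
Proof.
induction n; simpl.
- rewrite rsum_zero. reflexivity.
- rewrite IHn. rewrite <- rsum_plus. reflexivity.
Qed.

Lemma rsum_term_le n f i : (forall j, (j < n)%nat -> 0 <= f j) -> (i < n)%nat -> f i <= rsum n f.
Proof.
induction n; intros H Hi; [lia|]. simpl.
destruct (Nat.eq_dec i n) as [->|Hne].
- assert (0 <= rsum n f) by (apply rsum_nonneg; intros; apply H; lia). lra.
- assert (f i <= rsum n f) by (apply IHn; [intros; apply H; lia| lia]).
  assert (0 <= f n) by (apply H; lia). lra.
Qed.

Lemma rsum_zero_terms n f : (forall j, (j < n)%nat -> 0 <= f j) -> rsum n f = 0 ->
  forall i, (i < n)%nat -> f i = 0.
Proof.
intros H Hs i Hi. assert (f i <= rsum n f) by (apply rsum_term_le; auto).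
assert (0 <= f i) by auto. lra.
Qed.

Lemma rsum_if n i a b : (i < n)%nat ->
  rsum n (fun l => if Nat.eq_dec i l then a l else b l) = rsum n b + (a i - b i).
Proof.
induction n; intros Hi; [lia|]. simpl.
destruct (Nat.eq_dec i n) as [->|Hne].
- rewrite (rsum_ext n _ b).
  + ring.
  + intros l Hl. destruct (Nat.eq_dec n l); [lia|reflexivity].
- rewrite IHn by lia. ring.
Qed.

Lemma rsum_cs n z : rsum n z * rsum n z <= INR n * rsum n (fun i => z i * z i).
Proof.
induction n; simpl rsum.
- simpl. lra.
- rewrite S_INR.
  set (S := rsum n z) in *. set (Q := rsum n (fun i => z i * z i)) in *.
  assert (HQ : 0 <= Q) by (unfold Q; apply rsum_nonneg; intros; apply Rle_0_sqr).
  clearbody S Q.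
  assert (Hn : 0 <= INR n) by apply pos_INR.
  destruct (Req_dec (INR n) 0) as [H0|H0].
  + rewrite H0 in *. assert (S*S <= 0) by lra.
    assert (S = 0) by nra. subst. nra.
  + assert (Hp : 0 < INR n) by lra.
    assert (0 <= (S - INR n * z n) * (S - INR n * z n)) by apply Rle_0_sqr.
    assert (INR n * (Q + INR n * (z n * z n) - 2 * S * z n) >= 0) by nra.
    assert (Q + INR n * (z n * z n) - 2 * S * z n >= 0).
    { destruct (Rle_dec 0 (Q + INR n * (z n * z n) - 2 * S * z n)); [lra|].
      exfalso. assert (INR n * (Q + INR n * (z n * z n) - 2 * S * z n) < 0).
      { apply Rmult_pos_neg; lra. } lra. }
    nra.
Qed.

Definition Lv N A0 (x : nat -> R) i := rsum N (fun l => laplacian N A0 i l * x l).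
Definition cf (f : nat -> nat -> R) N j (x : nat -> R) := rsum N (fun i => f j i * x i).

Lemma lap_apply N A0 x i : (forall i, (i < N)%nat -> A0 i i = 0) -> (i < N)%nat ->
  Lv N A0 x i = rsum N (fun l => A0 i l * (x i - x l)).
Proof.
intros Hd Hi. unfold Lv, laplacian.
set (S := rsum N (fun m => if Nat.eq_dec m i then 0 else A0 i m)).
assert (HS : S = rsum N (A0 i)).
{ unfold S. apply rsum_ext. intros m Hm. destruct (Nat.eq_dec m i) as [->|]; [rewrite Hd; auto|auto]. }
rewrite (rsum_ext N _ (fun l => if Nat.eq_dec i l then S * x l else - A0 i l * x l)).
2:{ intros l Hl. destruct (Nat.eq_dec i l); reflexivity. }
rewrite rsum_if by auto.
rewrite (rsum_ext N (fun l => A0 i l * (x i - x l)) (fun l => A0 i l * x i - A0 i l * x l))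
  by (intros; ring).
rewrite rsum_minus, rsum_scal_r, <- HS.
rewrite (rsum_ext N (fun l => - A0 i l * x l) (fun l => (-1) * (A0 i l * x l))) by (intros; ring).
rewrite rsum_scal_l. rewrite Hd by auto. ring.
Qed.

Lemma lap_symm N A0 i j : (forall i j, (i < N)%nat -> (j < N)%nat -> A0 i j = A0 j i) ->
  (i < N)%nat -> (j < N)%nat -> laplacian N A0 i j = laplacian N A0 j i.
Proof.
intros Hs Hi Hj. unfold laplacian.
destruct (Nat.eq_dec i j) as [H1|H1]; destruct (Nat.eq_dec j i) as [H2|H2]; try lia.
- subst. reflexivity.
- rewrite Hs; auto.
Qed.

Lemma pair_antisym N (F : nat -> nat -> R) :
  (forall i l, (i < N)%nat -> (l < N)%nat -> F i l = - F l i) ->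
  rsum N (fun i => rsum N (fun l => F i l)) = 0.
Proof.
intros H.
assert (E : rsum N (fun i => rsum N (fun l => F i l)) = - rsum N (fun i => rsum N (fun l => F i l))).
{ rewrite rsum_swap at 1.
  rewrite (rsum_ext N _ (fun l => (-1) * rsum N (fun i => F l i))).
  - rewrite rsum_scal_l. ring.
  - intros l Hl. rewrite <- rsum_scal_l. apply rsum_ext. intros i Hi. rewrite H; auto. ring. }
lra.
Qed.

Lemma zero_sum N A0 x : (forall i j, (i < N)%nat -> (j < N)%nat -> A0 i j = A0 j i) ->
  rsum N (fun i => rsum N (fun l => A0 i l * (x i - x l))) = 0.
Proof.
intros Hs. apply pair_antisym. intros i l Hi Hl. rewrite Hs; auto. ring.
Qed.

Lemma qf_sum N A0 x : (forall i j, (i < N)%nat -> (j < N)%nat -> A0 i j = A0 j i) ->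
  rsum N (fun i => x i * rsum N (fun l => A0 i l * (x i - x l)))
  = / 2 * rsum N (fun i => rsum N (fun l => A0 i l * ((x i - x l) * (x i - x l)))).
Proof.
intros Hs.
assert (H0 : rsum N (fun i => rsum N (fun l => A0 i l * (x i - x l) * (x i + x l))) = 0).
{ apply pair_antisym. intros i l Hi Hl. rewrite Hs; auto. ring. }
assert (E : rsum N (fun i => x i * rsum N (fun l => A0 i l * (x i - x l)))
  = / 2 * rsum N (fun i => rsum N (fun l => A0 i l * ((x i - x l) * (x i - x l))))
    + / 2 * rsum N (fun i => rsum N (fun l => A0 i l * (x i - x l) * (x i + x l)))).
{ rewrite <- Rmult_plus_distr_l, <- rsum_plus.
  rewrite <- rsum_scal_l. apply rsum_ext. intros i Hi.
  rewrite <- rsum_plus, <- rsum_scal_l, <- rsum_scal_l. apply rsum_ext. intros. field. }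
rewrite E, H0. ring.
Qed.

Lemma reach_lt N A i j : reach N A i j -> (j < N)%nat.
Proof. intros H; induction H; auto. Qed.

Lemma const_of_edges N A0 (x : nat -> R) : connected N A0 ->
  (forall i l, (i < N)%nat -> (l < N)%nat -> A0 i l > 0 -> x i = x l) ->
  forall i, (i < N)%nat -> x i = x 0%nat.
Proof.
intros Hc He i Hi.
assert (H0 : (0 < N)%nat) by lia.
specialize (Hc 0%nat i H0 Hi).
induction Hc; auto.
rewrite <- IHHc by (eapply reach_lt; eauto). symmetry. apply He; auto. eapply reach_lt; eauto.
Qed.

Definition eig_hyp N A0 (f : nat -> nat -> R) (mu : nat -> R) :=
  forall j i, (j < N + N)%nat -> (i < N)%nat ->
    rsum N (fun l => laplacian N A0 i l * f j l) = mu j * f j i.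

Lemma cf_Lv N A0 f mu x j :
  (forall i j, (i < N)%nat -> (j < N)%nat -> A0 i j = A0 j i) ->
  eig_hyp N A0 f mu -> (j < N + N)%nat ->
  cf f N j (Lv N A0 x) = mu j * cf f N j x.
Proof.
intros Hs He Hj. unfold cf, Lv.
rewrite (rsum_ext N _ (fun i => rsum N (fun l => f j i * laplacian N A0 i l * x l))).
2:{ intros i Hi. rewrite <- rsum_scal_l. apply rsum_ext. intros; ring. }
rewrite rsum_swap, <- rsum_scal_l. apply rsum_ext. intros l Hl.
rewrite (rsum_ext N _ (fun i => (laplacian N A0 l i * f j i) * x l)).
2:{ intros i Hi. rewrite (lap_symm N A0 i l); auto. ring. }
rewrite rsum_scal_r, He by auto. ring.
Qed.

Lemma eig_qf N A0 f mu j :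
  (forall i j, (i < N)%nat -> (j < N)%nat -> A0 i j = A0 j i) ->
  (forall i, (i < N)%nat -> A0 i i = 0) ->
  eig_hyp N A0 f mu -> (j < N + N)%nat ->
  mu j * rsum N (fun i => f j i * f j i)
  = / 2 * rsum N (fun i => rsum N (fun l => A0 i l * ((f j i - f j l) * (f j i - f j l)))).
Proof.
intros Hs Hd He Hj. rewrite <- qf_sum by auto. rewrite <- rsum_scal_l.
apply rsum_ext. intros i Hi. rewrite <- lap_apply by auto. unfold Lv. rewrite He by auto. ring.
Qed.

Lemma eig_sum N A0 f mu j :
  (forall i j, (i < N)%nat -> (j < N)%nat -> A0 i j = A0 j i) ->
  (forall i, (i < N)%nat -> A0 i i = 0) ->
  eig_hyp N A0 f mu -> (j < N + N)%nat ->
  mu j * rsum N (f j) = 0.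
Proof.
intros Hs Hd He Hj. rewrite <- (zero_sum N A0 (f j)) by auto. rewrite <- rsum_scal_l.
apply rsum_ext. intros i Hi. rewrite <- lap_apply by auto. unfold Lv. rewrite He by auto. ring.
Qed.

Lemma dbl_nonneg N A0 (x : nat -> R) :
  (forall i j, (i < N)%nat -> (j < N)%nat -> 0 <= A0 i j) ->
  0 <= rsum N (fun i => rsum N (fun l => A0 i l * ((x i - x l) * (x i - x l)))).
Proof.
intros Hn. apply rsum_nonneg. intros i Hi. apply rsum_nonneg. intros l Hl.
apply Rmult_le_pos; [auto| apply Rle_0_sqr].
Qed.

Lemma mode_good N A0 f mu g1 g2 j :
  (forall i j, (i < N)%nat -> (j < N)%nat -> A0 i j = A0 j i) ->
  (forall i j, (i < N)%nat -> (j < N)%nat -> 0 <= A0 i j) ->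
  (forall i, (i < N)%nat -> A0 i i = 0) ->
  (forall mu, is_eigenvalue N (laplacian N A0) mu -> mu <> 0 -> g1 - 2 * g2 > - (4 / mu)) ->
  eig_hyp N A0 f mu -> (j < N + N)%nat ->
  mu j <> 0 -> (exists i, (i < N)%nat /\ f j i <> 0) ->
  0 < mu j /\ (g1 - 2*g2) * mu j > -4 /\ rsum N (f j) = 0.
Proof.
intros Hs Hn Hd Hmu He Hj Hm0 [i0 [Hi0 Hf0]].
assert (Hpos : 0 < mu j).
{ assert (Hq := eig_qf N A0 f mu j Hs Hd He Hj).
  assert (Hd2 := dbl_nonneg N A0 (f j) Hn).
  assert (HS : 0 < rsum N (fun i => f j i * f j i)).
  { assert (f j i0 * f j i0 <= rsum N (fun i => f j i * f j i)).
    { apply (rsum_term_le N (fun i => f j i * f j i)); auto. intros; apply Rle_0_sqr. }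
    assert (0 < f j i0 * f j i0) by (apply Rsqr_pos_lt; auto). lra. }
  destruct (Rlt_or_le 0 (mu j)) as [H|H]; auto.
  assert (mu j < 0) by lra.
  assert (mu j * rsum N (fun i => f j i * f j i) < 0) by (apply Rmult_neg_pos; auto).
  lra. }
split; [exact Hpos|]. split.
- assert (Hev : is_eigenvalue N (laplacian N A0) (mu j)).
  { exists (f j). split; [exists i0; auto|]. intros i Hi. apply He; auto. }
  specialize (Hmu _ Hev Hm0).
  assert (E : - (4 / mu j) * mu j = -4) by (field; lra).
  assert ((g1 - 2*g2) * mu j > - (4 / mu j) * mu j) by (apply Rmult_gt_compat_r; auto).
  lra.
- assert (Hz := eig_sum N A0 f mu j Hs Hd He Hj).
  apply Rmult_integral in Hz. destruct Hz; [lra|auto].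
Qed.

Lemma mode_bad N A0 f mu j :
  (forall i j, (i < N)%nat -> (j < N)%nat -> A0 i j = A0 j i) ->
  (forall i j, (i < N)%nat -> (j < N)%nat -> 0 <= A0 i j) ->
  (forall i, (i < N)%nat -> A0 i i = 0) ->
  connected N A0 ->
  eig_hyp N A0 f mu -> (j < N + N)%nat ->
  ~ (mu j <> 0 /\ (exists i, (i < N)%nat /\ f j i <> 0)) ->
  exists k, forall i, (i < N)%nat -> f j i = k.
Proof.
intros Hs Hn Hd Hc He Hj HG.
apply not_and_or in HG. destruct HG as [Hm|Hf].
- apply NNPP in Hm.
  exists (f j 0%nat). apply (const_of_edges N A0); auto.
  intros i l Hi Hl Hpos.
  assert (Hq := eig_qf N A0 f mu j Hs Hd He Hj). rewrite Hm in Hq.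
  assert (Hz : rsum N (fun i => rsum N (fun l => A0 i l * ((f j i - f j l) * (f j i - f j l)))) = 0) by lra.
  assert (Hi' : rsum N (fun l => A0 i l * ((f j i - f j l) * (f j i - f j l))) = 0).
  { apply (rsum_zero_terms N (fun i => rsum N (fun l => A0 i l * ((f j i - f j l) * (f j i - f j l))))); auto.
    intros i' Hi'. apply rsum_nonneg. intros l' Hl'. apply Rmult_le_pos; [auto|apply Rle_0_sqr]. }
  assert (Hl' : A0 i l * ((f j i - f j l) * (f j i - f j l)) = 0).
  { apply (rsum_zero_terms N (fun l => A0 i l * ((f j i - f j l) * (f j i - f j l)))); auto.
    intros l' Hl'. apply Rmult_le_pos; [auto|apply Rle_0_sqr]. } apply Rmult_integral in Hl'. destruct Hl' as [H|H]; [lra|].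
  apply Rmult_integral in H. destruct H; lra.
- exists 0. intros i Hi. destruct (Req_dec (f j i) 0) as [H|H]; auto.
  exfalso. apply Hf. exists i. auto.
Qed.

Definition mean N (x : nat -> R) := rsum N x / INR N.
Definition D2 N (x : nat -> R) := rsum N (fun i => (x i - mean N x) * (x i - mean N x)).

Lemma dev_sum N x : (0 < N)%nat -> rsum N (fun i => x i - mean N x) = 0.
Proof.
intros HN. rewrite rsum_minus, rsum_const. unfold mean.
assert (0 < INR N) by (apply lt_0_INR; auto). field. lra.
Qed.

Lemma D2_nonneg N x : 0 <= D2 N x.
Proof. apply rsum_nonneg. intros; apply Rle_0_sqr. Qed.

Lemma W_identity N (f : nat -> nat -> R) (w : nat -> R) x : (0 < N)%nat ->
  (forall y : nat -> R, rsum (N + N) (fun j => cf f N j y * cf f N j y) = rsum N (fun i => y i * y i)) ->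
  (forall j, (j < N + N)%nat ->
     (w j = 1 /\ rsum N (f j) = 0) \/ (w j = 0 /\ exists k, forall i, (i < N)%nat -> f j i = k)) ->
  rsum (N + N) (fun j => w j * (cf f N j x * cf f N j x)) = D2 N x.
Proof.
intros HN Hpar Hw. unfold D2. rewrite <- Hpar. apply rsum_ext. intros j Hj.
assert (E : cf f N j (fun i => x i - mean N x) = cf f N j x - mean N x * rsum N (f j)).
{ unfold cf. rewrite <- rsum_scal_l, <- rsum_minus. apply rsum_ext. intros; ring. }
destruct (Hw j Hj) as [[H1 H2]|[H1 [k Hk]]].
- rewrite E, H1, H2. ring.
- assert (E2 : cf f N j (fun i => x i - mean N x) = 0).
  { unfold cf. rewrite (rsum_ext N _ (fun i => k * (x i - mean N x))).
    - rewrite rsum_scal_l, dev_sum by auto. ring.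
    - intros i Hi. rewrite Hk; auto. }
  rewrite E2, H1. ring.
Qed.

Lemma Dbound N (Del : nat -> nat -> R) (r : nat -> R) (dl : R) :
  0 <= dl -> (forall i l, (i < N)%nat -> (l < N)%nat -> Rabs (Del i l) <= dl) ->
  rsum N (fun i => rsum N (fun l => Del i l * (r l - r i)) * rsum N (fun l => Del i l * (r l - r i)))
  <= 4 * INR N * INR N * (dl * dl) * D2 N r.
Proof.
intros Hdl Hb.
set (y := fun i => r i - mean N r).
assert (HS : D2 N r = rsum N (fun i => y i * y i)) by reflexivity.
assert (Hterm : forall i l, (i < N)%nat -> (l < N)%nat ->
   (Del i l * (r l - r i)) * (Del i l * (r l - r i)) <= 2 * (dl*dl) * (y l * y l) + 2*(dl*dl)*(y i * y i)).
{ intros i l Hi Hl.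
  replace (r l - r i) with (y l - y i) by (unfold y; ring).
  assert (H1 : Del i l * Del i l <= dl * dl).
  { specialize (Hb i l Hi Hl). revert Hb. unfold Rabs. destruct (Rcase_abs (Del i l)); intros; nra. }
  assert (H2 : (y l - y i) * (y l - y i) <= 2 * (y l * y l) + 2 * (y i * y i)).
  { assert (0 <= (y l + y i) * (y l + y i)) by apply Rle_0_sqr. lra. }
  assert (H3 : Del i l * Del i l * ((y l - y i) * (y l - y i)) <= dl * dl * (2 * (y l * y l) + 2 * (y i * y i))).
  { apply Rmult_le_compat; auto; apply Rle_0_sqr. }
  replace ((Del i l * (y l - y i)) * (Del i l * (y l - y i))) with (Del i l * Del i l * ((y l - y i) * (y l - y i))) by ring.
  lra. }
assert (Hrow : forall i, (i < N)%nat ->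
   rsum N (fun l => Del i l * (r l - r i)) * rsum N (fun l => Del i l * (r l - r i))
   <= INR N * (2 * (dl*dl) * D2 N r + 2 * (dl*dl) * INR N * (y i * y i))).
{ intros i Hi. eapply Rle_trans; [apply rsum_cs|]. apply Rmult_le_compat_l; [apply pos_INR|].
  eapply Rle_trans; [apply rsum_le; intros l Hl; apply (Hterm i l Hi Hl)|].
  rewrite rsum_plus, rsum_scal_l, rsum_const, <- HS. lra. }
eapply Rle_trans; [apply rsum_le; exact Hrow|].
rewrite (rsum_ext N _ (fun i => INR N * (2 * (dl * dl) * D2 N r) + (INR N * (2 * (dl * dl) * INR N)) * (y i * y i))).
2:{ intros; ring. }
rewrite rsum_plus, rsum_const, rsum_scal_l, <- HS. lra.
Qed.

Lemma mean_comb N g1 g2 p v :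
  mean N (fun i => g1 * p i + g2 * v i) = g1 * mean N p + g2 * mean N v.
Proof. unfold mean. rewrite rsum_plus, !rsum_scal_l. unfold Rdiv. ring. Qed.

Lemma D2_comb N g1 g2 p v :
  D2 N (fun i => g1 * p i + g2 * v i) <= 2 * (g1*g1) * D2 N p + 2 * (g2*g2) * D2 N v.
Proof.
unfold D2 at 1. rewrite mean_comb.
unfold D2. rewrite <- !rsum_scal_l, <- rsum_plus. apply rsum_le. intros i Hi.
set (a := p i - mean N p). set (b := v i - mean N v).
replace (g1 * p i + g2 * v i - (g1 * mean N p + g2 * mean N v)) with (g1 * a + g2 * b) by (unfold a, b; ring).
assert (0 <= (g1*a - g2*b)*(g1*a - g2*b)) by apply Rle_0_sqr.
lra.
Qed.

Lemma fin_min (n : nat) (Q : nat -> R -> Prop) :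
  (forall j e e', Q j e -> 0 < e' <= e -> Q j e') ->
  (forall j, (j < n)%nat -> exists e, 0 < e /\ Q j e) ->
  exists e, 0 < e /\ forall j, (j < n)%nat -> Q j e.
Proof.
intros Hm. induction n; intros H.
- exists 1. split; [lra|]. intros; lia.
- destruct IHn as [e1 [He1 Hq1]]. { intros; apply H; lia. }
  destruct (H n) as [e2 [He2 Hq2]]; [lia|].
  exists (Rmin e1 e2). split. { apply Rmin_pos; auto. }
  intros j Hj. destruct (Nat.eq_dec j n) as [->|Hne].
  + apply (Hm n e2); auto. split; [apply Rmin_pos; auto| apply Rmin_r].
  + apply (Hm j e1); [apply Hq1; lia|]. split; [apply Rmin_pos; auto| apply Rmin_l].
Qed.

Lemma Rdiv_le_0_compat (a b : R) : 0 <= a -> 0 < b -> 0 <= a / b.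
Proof. intros. unfold Rdiv. apply Rmult_le_pos; [lra|]. left; apply Rinv_0_lt_compat; lra. Qed.

Definition Vq (q r X Y : R) := X*X + 2*q*X*Y + r*(Y*Y).

Lemma Vq_generic (q r A1 t d : R) :
  0 < A1 -> A1 <= r - q*q ->
  (forall X Y, Vq q r (t*X - d*Y) X = Vq q r X Y - A1*(X*X+Y*Y)) ->
  exists th K B, 0 < th /\ 0 < K /\ 0 < B /\
    (forall X Y, X*X + Y*Y <= K * Vq q r X Y) /\
    (forall X Y e, Vq q r (t*X - d*Y + e) X <= (1 - th) * Vq q r X Y + B * (e*e)).
Proof.
intros HA Hr Hn.
set (K := 2 + (2*(q*q)+1)/A1).
set (Lam := 2 + q*q + r).
assert (HK : 2 <= K).
{ unfold K. assert (0 <= (2*(q*q)+1)/A1). { apply Rdiv_le_0_compat; nra. } lra. }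
assert (HL : 0 < Lam) by (unfold Lam; nra).
assert (Hlow : forall X Y, X*X + Y*Y <= K * Vq q r X Y).
{ intros X Y. unfold Vq.
  assert (E : X*X + 2*q*X*Y + r*(Y*Y) >= (X+q*Y)*(X+q*Y) + A1*(Y*Y)) by nra.
  assert (E2 : X*X + Y*Y <= 2*((X+q*Y)*(X+q*Y)) + (2*(q*q)+1)*(Y*Y)).
  { assert (0 <= (X+2*q*Y)*(X+2*q*Y)) by apply Rle_0_sqr. nra. }
  assert (E3 : (2*(q*q)+1)*(Y*Y) = ((2*(q*q)+1)/A1) * (A1*(Y*Y))) by (field; lra).
  assert (0 <= (2*(q*q)+1)/A1) by (apply Rdiv_le_0_compat; nra).
  assert (0 <= A1*(Y*Y)) by (apply Rmult_le_pos; [lra| apply Rle_0_sqr]).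
  assert (0 <= (X+q*Y)*(X+q*Y)) by apply Rle_0_sqr.
  set (V := X*X + 2*q*X*Y + r*(Y*Y)) in *.
  set (c := (2*(q*q)+1)/A1) in *.
  assert (c * V >= c * (A1*(Y*Y))).
  { apply Rle_ge, Rmult_le_compat_l; lra. }
  unfold K. lra. }
assert (Hup : forall X Y, Vq q r X Y <= Lam * (X*X+Y*Y)).
{ intros X Y; unfold Vq, Lam. clear Hlow. clearbody K.
  assert (0 <= (q*X-Y)*(q*X-Y)) by apply Rle_0_sqr.
  assert (0 <= X*X) by apply Rle_0_sqr. assert (0 <= Y*Y) by apply Rle_0_sqr.
  assert (0 <= q*q) by apply Rle_0_sqr.
  assert (0 <= r*(X*X)) by (apply Rmult_le_pos; lra).
  assert (0 <= (q*Y)*(q*Y)) by apply Rle_0_sqr. lra. }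
assert (Hpos : forall X Y, 0 <= Vq q r X Y).
{ intros X Y. specialize (Hlow X Y).
  assert (0 <= X*X) by apply Rle_0_sqr. assert (0 <= Y*Y) by apply Rle_0_sqr. nra. }
set (th := A1 / Lam).
assert (Hth : 0 < th) by (unfold th; apply Rdiv_lt_0_compat; lra).
exists (th/2), K, (1 + 2/th). repeat split.
- lra.
- lra.
- assert (0 < 2/th) by (apply Rdiv_lt_0_compat; lra). lra.
- exact Hlow.
- intros X Y e.
  set (Xn := t*X - d*Y).
  assert (Hvn : Vq q r Xn X <= (1 - th) * Vq q r X Y).
  { unfold Xn. rewrite Hn.
    assert (A1 * (X*X+Y*Y) >= th * Vq q r X Y).
    { unfold th. specialize (Hup X Y).
      assert (A1 / Lam * Vq q r X Y = A1 * (Vq q r X Y / Lam)) by (field; lra).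
      rewrite H. apply Rle_ge. apply Rmult_le_compat_l; [lra|].
      apply (Rmult_le_reg_r Lam); [lra|]. unfold Rdiv. rewrite Rmult_assoc, Rinv_l by lra. lra. }
    lra. }
  assert (Hsq : (Xn + q*X)*(Xn + q*X) <= Vq q r Xn X) by (unfold Vq; nra).
  assert (Hexp : Vq q r (Xn + e) X = Vq q r Xn X + 2*e*(Xn + q*X) + e*e) by (unfold Vq; ring).
  assert (Hcs : 2*e*(Xn+q*X) <= (th/2)*((Xn+q*X)*(Xn+q*X)) + (2/th)*(e*e)).
  { assert (0 <= (th/2) * ((Xn + q*X) - (2/th)*e) * ((Xn + q*X) - (2/th)*e)).
    { rewrite Rmult_assoc. apply Rmult_le_pos; [lra| apply Rle_0_sqr]. }
    assert (E : (th/2) * ((Xn + q*X) - (2/th)*e) * ((Xn + q*X) - (2/th)*e)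
              = (th/2)*((Xn+q*X)*(Xn+q*X)) - 2*e*(Xn+q*X) + (2/th)*(e*e)) by (field; lra).
    lra. }
  replace (t*X - d*Y + e) with (Xn + e) by (unfold Xn; ring).
  rewrite Hexp.
  specialize (Hpos X Y).
  assert (Vq q r Xn X + (th/2)*Vq q r Xn X <= (1 - th/2) * Vq q r X Y).
  { assert ((1 + th/2) * Vq q r Xn X <= (1 + th/2) * ((1 - th) * Vq q r X Y)) by
      (apply Rmult_le_compat_l; lra).
    assert (HH: (1 + th/2) * ((1 - th) * Vq q r X Y) = (1 - th/2) * Vq q r X Y - (th*th/2) * Vq q r X Y) by field.
    assert (0 <= (th*th/2) * Vq q r X Y).
    { apply Rmult_le_pos; [|lra]. assert (0 <= th*th) by apply Rle_0_sqr. lra. }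
    lra. }
  assert (th/2*((Xn+q*X)*(Xn+q*X)) <= th/2 * Vq q r Xn X) by (apply Rmult_le_compat_l; lra).
  assert (0 <= 2/th*(e*e)) by (apply Rmult_le_pos; [apply Rdiv_le_0_compat; lra | apply Rle_0_sqr]).
  lra.
Qed.

Definition tf (g2 mu : R) := 2 - mu*g2.
Definition df (g1 g2 mu : R) := 1 - mu*(g2-g1).
Definition qf (g1 g2 mu : R) := - (tf g2 mu * df g1 g2 mu) / (1 + df g1 g2 mu).
Definition rf (g1 g2 mu : R) :=
  (df g1 g2 mu * df g1 g2 mu + 1
   - tf g2 mu * tf g2 mu * (1 - df g1 g2 mu) / (1 + df g1 g2 mu)) / 2.
Definition phi (g1 g2 mu x y : R) := Vq (qf g1 g2 mu) (rf g1 g2 mu) (x + y) x.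

Lemma mode_lemma (g1 g2 mu : R) :
  0 < g1 -> g1 < g2 -> 0 < mu -> (g1 - 2*g2)*mu > -4 ->
  exists th K B, 0 < th /\ 0 < K /\ 0 < B /\
    (forall x y, x*x + y*y <= K * phi g1 g2 mu x y) /\
    (forall x y e, phi g1 g2 mu (x+y) (y - mu*(g1*x+g2*y) + e)
                   <= (1 - th) * phi g1 g2 mu x y + B * (e*e)).
Proof.
intros H1 H2 H3 H4.
unfold phi.
assert (Hd1 : 0 < 1 + df g1 g2 mu - tf g2 mu) by (unfold tf, df; nra).
assert (Hd2 : 0 < 1 + df g1 g2 mu + tf g2 mu) by (unfold tf, df; nra).
assert (Hd3 : 0 < 1 - df g1 g2 mu) by (unfold df; nra).
assert (Hxy : forall x y e, x + y + (y - mu * (g1 * x + g2 * y) + e)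
              = tf g2 mu*(x+y) - df g1 g2 mu*x + e) by (intros; unfold tf, df; ring).
set (t := tf g2 mu) in *. set (d := df g1 g2 mu) in *.
assert (Hd : 0 < 1 + d) by lra.
assert (Hp : 0 < (1+d)*(1+d) - t*t).
{ replace ((1+d)*(1+d) - t*t) with ((1+d-t)*(1+d+t)) by ring. apply Rmult_lt_0_compat; lra. }
set (s := t*t*(1-d)/(1+d)).
set (A1 := (1 - d*d - s)/2).
assert (HA1 : 0 < A1).
{ unfold A1. assert (E : 1 - d*d - s = (1-d)*((1+d)*(1+d) - t*t)/(1+d)) by (unfold s; field; lra).
  rewrite E. apply Rdiv_lt_0_compat; [|lra]. apply Rdiv_lt_0_compat; [|lra].
  apply Rmult_lt_0_compat; lra. }
assert (Hr : A1 <= rf g1 g2 mu - qf g1 g2 mu * qf g1 g2 mu).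
{ unfold rf, qf. fold t d. fold s.
  assert (E : (d * d + 1 - s) / 2 - - (t * d) / (1 + d) * (- (t * d) / (1 + d)) - A1
            = d*d*((1+d)*(1+d) - t*t)/((1+d)*(1+d))) by (unfold A1, s; field; lra).
  assert (0 <= d*d*((1+d)*(1+d) - t*t)/((1+d)*(1+d))).
  { apply Rdiv_le_0_compat. apply Rmult_le_pos. apply Rle_0_sqr. lra.
    apply Rmult_lt_0_compat; lra. }
  lra. }
assert (Hn : forall X Y, Vq (qf g1 g2 mu) (rf g1 g2 mu) (t*X - d*Y) X
                         = Vq (qf g1 g2 mu) (rf g1 g2 mu) X Y - A1*(X*X+Y*Y)).
{ intros X Y. unfold Vq, rf, qf, A1, s. fold t d. field. lra. }
destruct (Vq_generic _ _ _ _ _ HA1 Hr Hn) as [th [K [B [Hth [HK [HB [Hlow Hstep]]]]]]].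
exists th, (3*K), B. repeat split; try lra.
- intros x y. specialize (Hlow (x+y) x).
  assert (x*x + y*y <= 3*((x+y)*(x+y) + x*x)).
  { assert (0 <= (3*x+2*y)*(3*x+2*y)) by apply Rle_0_sqr. assert (0 <= x*x) by apply Rle_0_sqr. lra. }
  lra.
- intros x y e.
  rewrite Hxy. apply Hstep.
Qed.

Definition symm (N : nat) (L : nat -> nat -> R) :=
  forall i j, (i < N)%nat -> (j < N)%nat -> L i j = L j i.
Definition frame_prop (N : nat) (L : nat -> nat -> R) :=
  exists (f : nat -> nat -> R) (mu : nat -> R),
    (forall j i, (j < N + N)%nat -> (i < N)%nat ->
       rsum N (fun l => L i l * f j l) = mu j * f j i) /\
    (forall x : nat -> R,
       rsum (N + N) (fun j => rsum N (fun i => f j i * x i) * rsum N (fun i => f j i * x i))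
       = rsum N (fun i => x i * x i)).

From mathcomp Require all_boot all_order all_algebra Rstruct complex sesquilinear spectral.

Module Spec.
Import all_boot all_order all_algebra Rstruct complex sesquilinear spectral.
Import GRing.Theory Num.Theory.
Local Open Scope ring_scope.
Local Open Scope sesquilinear_scope.
Local Notation cRe := (@complex.Re R).
Local Notation cIm := (@complex.Im R).
Local Notation rc x := (real_complex R x).

Lemma rsum_big n (f : nat -> R) : rsum n f = \sum_(i < n) f i.
Proof. elim: n => [|n IH]; first by rewrite big_ord0. by rewrite big_ord_recr /= IH. Qed.

Lemma rsum_add n m (f : nat -> R) : rsum (n + m) f = rsum n f + rsum m (fun k => f (n + k)%N).
Proof.
elim: m => [|m IH]; first by rewrite addn0 /= addr0.
by rewrite addnS /= IH addrA.
Qed.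

Lemma Re_sum n (F : 'I_n -> R[i]) : cRe (\sum_(i < n) F i) = \sum_(i < n) cRe (F i).
Proof.
elim: n F => [|n IH] F; first by rewrite !big_ord0; reflexivity.
have H : forall x y : R[i], cRe (x + y) = cRe x + cRe y by move=> [? ?] [? ?].
by rewrite !big_ord_recr H IH.
Qed.

Lemma Im_sum n (F : 'I_n -> R[i]) : cIm (\sum_(i < n) F i) = \sum_(i < n) cIm (F i).
Proof.
elim: n F => [|n IH] F; first by rewrite !big_ord0; reflexivity.
have H : forall x y : R[i], cIm (x + y) = cIm x + cIm y by move=> [? ?] [? ?].
by rewrite !big_ord_recr H IH.
Qed.

Lemma Re_mulr (a : R[i]) (x : R) : cRe (a * (rc x)) = cRe a * x.
Proof. by case: a => a b /=; rewrite mulr0 subr0. Qed.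
Lemma Im_mulr (a : R[i]) (x : R) : cIm (a * (rc x)) = cIm a * x.
Proof. by case: a => a b /=; rewrite mulr0 add0r. Qed.


Lemma frame N L : symm N L -> frame_prop N L.
Proof.
move=> HS.
case: N HS => [|n] HS.
  exists (fun _ _ => 0%R), (fun _ => 0%R); split.
    by move=> j i _ /ltP.
  by move=> x.
set N := n.+1 in HS *.
pose A : 'M[R[i]]_N := \matrix_(i, j) rc (L i j).
have AT : A ^t* = A.
  apply/matrixP => i j; rewrite !mxE conj_Creal ?complex_real //.
  by rewrite HS //; apply/ltP.
have Anormal : A \is normalmx by rewrite qualifE AT.
have Aherm : A \is hermsymmx by apply/is_hermitianmxP; rewrite expr0 scale1r AT.
pose P := spectralmx A; pose d := spectral_diag A.
have HA : A = invmx P *m diag_mx d *m P by apply/orthomx_spectralP.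
have PU : P \is unitarymx := spectral_unitarymx A.
have Punit : P \in unitmx := spectral_unit A.
have HPA : P *m A = diag_mx d *m P.
  by rewrite {1}HA !mulmxA mulmxV // mul1mx.
have PtP : P ^t* *m P = 1%:M by rewrite -(invmx_unitary PU) mulVmx.
have dreal : forall k, cIm (d 0 k) = 0.
  move=> k; have /mxOverP/(_ 0 k) := hermitian_spectral_diag_real Aherm.
  by case: (d 0 k) => a b; rewrite complex_real => /eqP.
have Hent : forall k l : 'I_N, \sum_(i < N) P k i * rc (L i l) = d 0 k * P k l.
  move=> k l; have := congr1 (fun M : 'M[R[i]]_N => M k l) HPA; rewrite mul_diag_mx !mxE /=.
  by move=> <-; apply: eq_bigr => i _; rewrite mxE.
pose f := fun j i : nat => if (j < N)%N then cRe (P (inord j) (inord i))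
                           else cIm (P (inord (j - N)) (inord i)).
pose mu := fun j : nat => if (j < N)%N then cRe (d 0 (inord j)) else cRe (d 0 (inord (j - N))).
exists f, mu; split.
  move=> j i /ltP Hj /ltP Hi; rewrite rsum_big /f /mu.
  have Hs : forall k : 'I_N, \sum_(l < N) cRe (P k l) * L l i = cRe (d 0 k) * cRe (P k (inord i)).
    move=> k; have := congr1 cRe (Hent k (inord i)); rewrite Re_sum.
    under eq_bigr => l _ do rewrite Re_mulr.
    rewrite inordK //; move=> ->; case: (d 0 k) (dreal k) => a b /= ->.
    by case: (P k _) => u w /=; rewrite mul0r subr0.
  have Hs2 : forall k : 'I_N, \sum_(l < N) cIm (P k l) * L l i = cRe (d 0 k) * cIm (P k (inord i)).
    move=> k; have := congr1 cIm (Hent k (inord i)); rewrite Im_sum.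
    under eq_bigr => l _ do rewrite Im_mulr.
    rewrite inordK //; move=> ->; case: (d 0 k) (dreal k) => a b /= ->.
    by case: (P k _) => u w /=; rewrite mul0r addr0 mulrC.
  case: ifP => Hjn.
    rewrite RmultE -Hs; apply: eq_bigr => l _; rewrite RmultE inord_val mulrC HS //; apply/ltP => //.
  rewrite RmultE -Hs2; apply: eq_bigr => l _; rewrite RmultE inord_val mulrC HS //; apply/ltP => //.
move=> x.
pose X : 'cV[R[i]]_N := \col_i rc (x i).
pose z := fun k : 'I_N => \sum_(i < N) P k i * rc (x i).
have Hc1 : forall k : 'I_N, rsum N (fun i => f k i * x i) = cRe (z k).
  move=> k; rewrite rsum_big /z Re_sum; apply: eq_bigr => i _.
  by rewrite /f ltn_ord !inord_val Re_mulr.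
have Hc2 : forall k : 'I_N, rsum N (fun i => f (N + k)%N i * x i) = cIm (z k).
  move=> k; rewrite rsum_big /z Im_sum; apply: eq_bigr => i _.
  by rewrite /f ltnNge leq_addr /= addKn !inord_val Im_mulr.
have Hkey : \sum_(k < N) z k * (z k)^* = \sum_(i < N) rc (x i * x i).
  have E1 : forall k, z k = \sum_(j < N) P k j * X j 0.
    by move=> k; apply: eq_bigr => i _; rewrite mxE.
  have E2 : ((P *m X) ^t* *m (P *m X)) 0 0 = \sum_(k < N) z k * (z k)^*.
    rewrite !mxE; apply: eq_bigr => k _; rewrite !mxE -E1 mulrC //.
  rewrite -E2 trmx_mul map_mxM mulmxA -(mulmxA _ _ P) PtP mulmx1 !mxE.
  apply: eq_bigr => i _; rewrite !mxE.
  rewrite -[X in X * _ = _]/((rc (x i))^*) conj_Creal ?complex_real // rmorphM //.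
rewrite plusE rsum_add !rsum_big.
under eq_bigr => k _ do rewrite Hc1.
under [X in _ + X = _]eq_bigr => k _ do rewrite Hc2.
apply: complexI; rewrite rmorphD !rmorph_sum -big_split /= -Hkey.
apply: eq_bigr => k _; rewrite -normCK -add_Re2_Im2 !expr2 RmultE.
by rewrite rmorphD /=.
Qed.
End Spec.

Set Bullet Behavior "Strict Subproofs".

Lemma geo_conv (u : nat -> R) (C rho V0 : R) : 0 <= rho < 1 -> 0 <= C -> 0 <= V0 ->
  (forall k, u k * u k <= C * (rho ^ k * V0)) -> Un_cv u 0.
Proof.
intros Hr HC HV Hu eps Heps.
assert (Hy : 0 < eps * eps / (C * V0 + 1)).
{ apply Rdiv_lt_0_compat; [nra|]. assert (0 <= C*V0) by (apply Rmult_le_pos; auto). lra. }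
assert (Habs : Rabs rho < 1) by (rewrite Rabs_right; lra).
destruct (pow_lt_1_zero rho Habs _ Hy) as [n0 Hn0].
exists n0. intros n Hn. specialize (Hn0 n Hn). specialize (Hu n).
unfold Rdist. rewrite Rminus_0_r.
assert (Hp : 0 <= rho ^ n) by (apply pow_le; lra).
rewrite Rabs_right in Hn0 by lra.
assert (HCV : 0 <= C * V0) by (apply Rmult_le_pos; auto).
assert (H1 : C * (rho ^ n * V0) = (C*V0) * rho ^ n) by ring.
assert (H2 : (C*V0) * rho^n <= (C*V0+1) * rho^n) by (apply Rmult_le_compat_r; lra).
assert (H3 : (C*V0+1) * rho^n < (C*V0+1) * (eps * eps / (C * V0 + 1))) by (apply Rmult_lt_compat_l; lra).
assert (H4 : (C*V0+1) * (eps * eps / (C * V0 + 1)) = eps * eps) by (field; lra).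
assert (Hsq : u n * u n < eps * eps) by lra.
destruct (Rlt_or_le (Rabs (u n)) eps) as [H|H]; auto.
exfalso. assert (eps * eps <= Rabs (u n) * Rabs (u n)) by (apply Rmult_le_compat; lra).
rewrite <- Rabs_mult in H0. rewrite Rabs_right in H0 by (apply Rle_ge, Rle_0_sqr). lra.
Qed.

Lemma inv_bound K e : 0 < K -> 0 < e -> e <= 1/K -> K <= 1/e.
Proof.
intros HK He H. apply (Rmult_le_compat_l K) in H; [|lra].
replace (K * (1/K)) with 1 in H by (field; lra).
apply (Rmult_le_reg_r e); [lra|]. replace (1/e*e) with 1 by (field; lra). lra.
Qed.

Theorem theorem3 (N : nat) (A0 : nat -> nat -> R) (g1 g2 : R)
  (Hsym : forall i j, (i < N)%nat -> (j < N)%nat -> A0 i j = A0 j i)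
  (Hnn : forall i j, (i < N)%nat -> (j < N)%nat -> 0 <= A0 i j)
  (Hdiag : forall i, (i < N)%nat -> A0 i i = 0)
  (Hconn : connected N A0)
  (Hg : 0 < g1 /\ g1 < g2)
  (Hmu : forall mu, is_eigenvalue N (laplacian N A0) mu -> mu <> 0 ->
           g1 - 2 * g2 > - (4 / mu)) :
  exists dA : R,
    0 < dA /\
    (forall i j, (i < N)%nat -> (j < N)%nat -> A0 i j > 0 -> dA < A0 i j) /\
    forall (alpha : nat -> nat -> nat -> R)   (* alpha k i j = alpha_{i,j}^(k) *)
           (a : nat -> nat -> nat -> R)       (* a k i j = a_{ij}^(k) *)
           (p v : nat -> nat -> R),           (* p k i = p_i^(k), v k i = v_i^(k) *)
      (forall k i j, (i < N)%nat -> (j < N)%nat -> A0 i j > 0 ->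
         sqrt (A0 i j - dA) < alpha k i j < sqrt (A0 i j + dA)) ->
      (forall k i j, (i < N)%nat -> (j < N)%nat -> A0 i j > 0 ->
         a k i j = alpha k i j * alpha k j i) ->
      (forall k i j, (i < N)%nat -> (j < N)%nat -> ~ (A0 i j > 0) ->
         a k i j = 0) ->
      (forall k i, (i < N)%nat -> p (S k) i = p k i + v k i) ->
      (forall k i, (i < N)%nat ->
         v (S k) i = v k i +
           rsum N (fun j => g1 * a k i j * (p k j - p k i)
                            + g2 * a k i j * (v k j - v k i))) ->
      forall i j, (i < N)%nat -> (j < N)%nat ->
        Un_cv (fun k => p k i - p k j) 0 /\ Un_cv (fun k => v k i - v k j) 0.
Proof.
destruct Hg as [Hg1 Hg12].
assert (HsL : symm N (laplacian N A0)) by (intros i j Hi Hj; apply lap_symm; auto).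
destruct (Spec.frame N (laplacian N A0) HsL) as [f [mu [Heig Hpar]]].
assert (He : eig_hyp N A0 f mu) by exact Heig.
set (G := fun j => mu j <> 0 /\ (exists i, (i < N)%nat /\ f j i <> 0)).
set (Qm := fun j e => G j ->
   (forall x y, x*x + y*y <= (1/e) * phi g1 g2 (mu j) x y) /\
   (forall x y e', phi g1 g2 (mu j) (x+y) (y - mu j*(g1*x+g2*y) + e')
       <= (1 - e) * phi g1 g2 (mu j) x y + (1/e) * (e'*e'))).
assert (Qmono : forall j e e', Qm j e -> 0 < e' <= e -> Qm j e').
{ intros j e e' Hq [He' Hle] HGj. destruct (Hq HGj) as [H1 H2].
  assert (Hinv : 1/e <= 1/e').
  { unfold Rdiv. rewrite !Rmult_1_l. apply Rinv_le_contravar; lra. }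
  assert (Hepos : 0 < 1/e) by (apply Rdiv_lt_0_compat; lra).
  assert (Hphi : forall x y, 0 <= phi g1 g2 (mu j) x y).
  { intros x y. specialize (H1 x y).
    assert (0 <= x*x) by apply Rle_0_sqr. assert (0 <= y*y) by apply Rle_0_sqr.
    destruct (Rle_or_lt 0 (phi g1 g2 (mu j) x y)) as [Hp|Hp]; auto.
    assert (1/e * phi g1 g2 (mu j) x y < 0) by (apply Rmult_pos_neg; auto). lra. }
  split.
  - intros x y. eapply Rle_trans; [apply H1|]. apply Rmult_le_compat_r; auto.
  - intros x y e0. eapply Rle_trans; [apply H2|].
    assert ((1 - e) * phi g1 g2 (mu j) x y <= (1 - e') * phi g1 g2 (mu j) x y)
      by (apply Rmult_le_compat_r; [apply Hphi|lra]).
    assert (1/e * (e0*e0) <= 1/e' * (e0*e0)) by (apply Rmult_le_compat_r; [apply Rle_0_sqr|lra]).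
    lra. }
assert (Hqm : exists e, 0 < e /\ forall j, (j < N + N)%nat -> Qm j e).
{ apply fin_min; [exact Qmono|].
  intros j Hj. destruct (classic (G j)) as [HG|HG].
  - destruct HG as [Hm0 Hex].
    destruct (mode_good N A0 f mu g1 g2 j Hsym Hnn Hdiag Hmu He Hj Hm0 Hex) as [Hmp [Hmc _]].
    destruct (mode_lemma g1 g2 (mu j) Hg1 Hg12 Hmp Hmc) as [th [K [B [Hth [HK [HB [Hl Hs]]]]]]].
    set (e := Rmin th (Rmin (1/K) (1/B))).
    assert (He1 : e <= th) by apply Rmin_l.
    assert (He2 : e <= 1/K) by (eapply Rle_trans; [apply Rmin_r|apply Rmin_l]).
    assert (He3 : e <= 1/B) by (eapply Rle_trans; [apply Rmin_r|apply Rmin_r]).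
    assert (Hepos : 0 < e).
    { apply Rmin_pos; auto. apply Rmin_pos; apply Rdiv_lt_0_compat; lra. }
    assert (HKe : K <= 1/e) by (apply inv_bound; auto).
    assert (HBe : B <= 1/e) by (apply inv_bound; auto).
    exists e. split; auto. intros _.
    assert (Hphi : forall x y, 0 <= phi g1 g2 (mu j) x y).
    { intros x y. specialize (Hl x y).
      assert (0 <= x*x) by apply Rle_0_sqr. assert (0 <= y*y) by apply Rle_0_sqr.
      destruct (Rle_or_lt 0 (phi g1 g2 (mu j) x y)) as [Hp|Hp]; auto.
      assert (K * phi g1 g2 (mu j) x y < 0) by (apply Rmult_pos_neg; auto). lra. }
    split.
    + intros x y. eapply Rle_trans; [apply Hl|]. apply Rmult_le_compat_r; auto.
    + intros x y e0. eapply Rle_trans; [apply Hs|].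
      assert ((1 - th) * phi g1 g2 (mu j) x y <= (1 - e) * phi g1 g2 (mu j) x y)
        by (apply Rmult_le_compat_r; [apply Hphi|lra]).
      assert (B * (e0*e0) <= 1/e * (e0*e0)) by (apply Rmult_le_compat_r; [apply Rle_0_sqr|lra]).
      lra.
  - exists 1. split; [lra|]. intros HG'; contradiction. }
destruct Hqm as [e0 [He0 Hqm]].
set (th := Rmin e0 1).
assert (Hth : 0 < th) by (apply Rmin_pos; lra).
assert (Hth1 : th <= 1) by apply Rmin_r.
assert (Hqth : forall j, (j < N + N)%nat -> Qm j th).
{ intros j Hj. apply (Qmono j e0); auto. split; auto. apply Rmin_l. }
clearbody th. clear Hqm.
set (K := 1/th). set (B := 1/th).
assert (HK : 0 < K) by (apply Rdiv_lt_0_compat; lra).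
assert (Hedge : exists m, 0 < m /\ forall i, (i < N)%nat -> forall j, (j < N)%nat -> A0 i j > 0 -> m <= A0 i j).
{ apply (fin_min N (fun i m => forall j, (j < N)%nat -> A0 i j > 0 -> m <= A0 i j)).
  - intros i e e' H [H1 H2] j Hj Hp. specialize (H j Hj Hp). lra.
  - intros i Hi. apply (fin_min N (fun j m => A0 i j > 0 -> m <= A0 i j)).
    + intros j e e' H [H1 H2] Hp. specialize (H Hp). lra.
    + intros j Hj. destruct (Rlt_or_le 0 (A0 i j)) as [Hp|Hp].
      * exists (A0 i j). split; auto. intros; lra.
      * exists 1. split; [lra|]. intros; lra. }
destruct Hedge as [m [Hm Hedge]].
set (Z := B * (INR N * INR N) * (g1*g1 + g2*g2) * K).
assert (HZ : 0 <= Z).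
{ unfold Z. apply Rmult_le_pos; [|lra]. apply Rmult_le_pos; [|nra].
  apply Rmult_le_pos; [unfold B; apply Rlt_le, Rdiv_lt_0_compat; lra|].
  apply Rmult_le_pos; apply pos_INR. }
set (Cst := 16 * Z + 1).
set (dA := Rmin 1 (Rmin (th / Cst) (m / 2))).
assert (HdA1 : dA <= 1) by apply Rmin_l.
assert (HdA2 : dA <= th / Cst) by (eapply Rle_trans; [apply Rmin_r|apply Rmin_l]).
assert (HdA3 : dA <= m / 2) by (eapply Rle_trans; [apply Rmin_r|apply Rmin_r]).
assert (HdA : 0 < dA).
{ apply Rmin_pos; [lra|]. apply Rmin_pos; [apply Rdiv_lt_0_compat; unfold Cst; lra | lra]. }
assert (HdAsq : 16 * Z * (dA * dA) <= th).
{ assert (dA * dA <= dA) by (rewrite <- (Rmult_1_r dA) at 3; apply Rmult_le_compat_l; lra).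
  assert (dA * Cst <= th).
  { apply (Rmult_le_compat_r Cst) in HdA2; [|unfold Cst; lra].
    replace (th / Cst * Cst) with th in HdA2 by (field; unfold Cst; lra). lra. }
  assert (16 * Z * (dA*dA) <= 16 * Z * dA) by (apply Rmult_le_compat_l; lra).
  assert (16 * Z * dA <= Cst * dA) by (apply Rmult_le_compat_r; unfold Cst; lra).
  lra. }
clearbody dA.
exists dA. split; [exact HdA|]. split.
{ intros i j Hi Hj Hp. specialize (Hedge i Hi j Hj Hp). lra. }
intros alpha a p v Halpha Ha Ha0 Hp Hv i0 j0 Hi0 Hj0.
assert (HN : (0 < N)%nat) by lia.
set (w := fun j => if excluded_middle_informative (G j) then 1 else 0).
assert (Hw : forall j, (j < N + N)%nat ->
   (w j = 1 /\ G j /\ rsum N (f j) = 0) \/ (w j = 0 /\ exists k, forall i, (i < N)%nat -> f j i = k)).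
{ intros j Hj. unfold w. destruct (excluded_middle_informative (G j)) as [HG|HG].
  - left. split; [reflexivity|]. split; auto. destruct HG as [Hm0 Hex].
    destruct (mode_good N A0 f mu g1 g2 j Hsym Hnn Hdiag Hmu He Hj Hm0 Hex) as [_ [_ Hs0]]; auto.
  - right. split; [reflexivity|]. apply (mode_bad N A0 f mu j); auto. }
assert (Hw' : forall j, (j < N + N)%nat -> (w j = 1 /\ rsum N (f j) = 0) \/
           (w j = 0 /\ exists k, forall i, (i < N)%nat -> f j i = k)).
{ intros j Hj. destruct (Hw j Hj) as [[? [? ?]]|?]; [left|right]; auto. }
assert (Hpar' : forall x, rsum (N + N) (fun j => cf f N j x * cf f N j x) = rsum N (fun i => x i * x i))
  by exact Hpar.
assert (HW : forall x, rsum (N + N) (fun j => w j * (cf f N j x * cf f N j x)) = D2 N x).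
{ intros x. apply W_identity; [exact HN | exact Hpar' | exact Hw']. }
clearbody w.
set (r := fun k i => g1 * p k i + g2 * v k i).
set (Del := fun k i l => a k i l - A0 i l).
assert (Hdel : forall k i l, (i < N)%nat -> (l < N)%nat -> Rabs (Del k i l) <= dA).
{ intros k i l Hi Hl. unfold Del. apply Rabs_le.
  destruct (Rlt_or_le 0 (A0 i l)) as [Hpos|Hnp].
  - assert (Hpos' : A0 l i > 0) by (rewrite Hsym; auto).
    rewrite (Ha k i l Hi Hl Hpos).
    destruct (Halpha k i l Hi Hl Hpos) as [Ha1 Ha2].
    destruct (Halpha k l i Hl Hi Hpos') as [Hb1 Hb2].
    rewrite (Hsym l i Hl Hi) in Hb1, Hb2.
    assert (Hm1 : 0 <= A0 i l - dA) by (specialize (Hedge i Hi l Hl Hpos); lra).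
    assert (Hs1 : 0 <= sqrt (A0 i l - dA)) by apply sqrt_pos.
    assert (Hs11 : sqrt (A0 i l - dA) * sqrt (A0 i l - dA) = A0 i l - dA) by (apply sqrt_sqrt; lra).
    assert (Hs22 : sqrt (A0 i l + dA) * sqrt (A0 i l + dA) = A0 i l + dA) by (apply sqrt_sqrt; lra).
    set (s1 := sqrt (A0 i l - dA)) in *. set (s2 := sqrt (A0 i l + dA)) in *.
    set (x1 := alpha k i l) in *. set (x2 := alpha k l i) in *.
    clearbody s1 s2 x1 x2.
    split.
    + assert (0 <= x1*(x2 - s1)) by (apply Rmult_le_pos; lra).
      assert (0 <= s1*(x1 - s1)) by (apply Rmult_le_pos; lra).
      lra.
    + assert (0 <= s2*(s2 - x2)) by (apply Rmult_le_pos; lra).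
      assert (0 <= x2*(s2 - x1)) by (apply Rmult_le_pos; lra).
      lra.
  - assert (Hz : ~ (A0 i l > 0)) by lra. rewrite (Ha0 k i l Hi Hl Hz).
    assert (A0 i l = 0) by (specialize (Hnn i l Hi Hl); lra). lra. }
assert (Hcp : forall k j, cf f N j (p (S k)) = cf f N j (p k) + cf f N j (v k)).
{ intros k j. unfold cf. rewrite <- rsum_plus. apply rsum_ext. intros i Hi. rewrite Hp by auto. ring. }
set (Dk := fun k i => rsum N (fun l => Del k i l * (r k l - r k i))).
assert (Hvi : forall k i, (i < N)%nat -> v (S k) i = v k i - Lv N A0 (r k) i + Dk k i).
{ intros k i Hi. rewrite Hv by auto. rewrite lap_apply by auto. unfold Dk.
  assert (E : rsum N (fun j => g1 * a k i j * (p k j - p k i) + g2 * a k i j * (v k j - v k i))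
     = rsum N (fun l => (-1) * (A0 i l * (r k i - r k l))) + rsum N (fun l => Del k i l * (r k l - r k i))).
  { rewrite <- rsum_plus. apply rsum_ext. intros l Hl. unfold Del, r. ring. }
  rewrite E, rsum_scal_l. ring. }
assert (Hcv : forall k j, (j < N + N)%nat -> cf f N j (v (S k))
   = cf f N j (v k) - mu j * (g1 * cf f N j (p k) + g2 * cf f N j (v k)) + cf f N j (Dk k)).
{ intros k j Hj.
  assert (E1 : cf f N j (v (S k)) = cf f N j (v k) - cf f N j (Lv N A0 (r k)) + cf f N j (Dk k)).
  { unfold cf. rewrite <- rsum_minus, <- rsum_plus. apply rsum_ext. intros i Hi. rewrite Hvi by auto. ring. }
  rewrite E1, (cf_Lv N A0 f mu (r k) j Hsym He Hj).
  assert (E2 : cf f N j (r k) = g1 * cf f N j (p k) + g2 * cf f N j (v k)).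
  { unfold cf, r. rewrite <- !rsum_scal_l, <- rsum_plus. apply rsum_ext. intros; ring. }
  rewrite E2. ring. }
set (V := fun k => rsum (N + N) (fun j => w j * phi g1 g2 (mu j) (cf f N j (p k)) (cf f N j (v k)))).
assert (Hphi_w : forall k j, (j < N + N)%nat ->
   0 <= w j * phi g1 g2 (mu j) (cf f N j (p k)) (cf f N j (v k)) /\
   w j * (cf f N j (p k) * cf f N j (p k)) + w j * (cf f N j (v k) * cf f N j (v k))
     <= K * (w j * phi g1 g2 (mu j) (cf f N j (p k)) (cf f N j (v k)))).
{ intros k j Hj. destruct (Hw j Hj) as [[Hw1 [HG _]]|[Hw0 _]].
  - rewrite Hw1. destruct (Hqth j Hj HG) as [H1 _].
    specialize (H1 (cf f N j (p k)) (cf f N j (v k))). fold K in H1.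
    set (P := phi g1 g2 (mu j) (cf f N j (p k)) (cf f N j (v k))) in *.
    set (c1 := cf f N j (p k)) in *. set (c2 := cf f N j (v k)) in *.
    assert (0 <= c1*c1) by apply Rle_0_sqr. assert (0 <= c2*c2) by apply Rle_0_sqr.
    assert (0 <= P).
    { destruct (Rle_or_lt 0 P) as [Hq|Hq]; auto.
      assert (K * P < 0) by (apply Rmult_pos_neg; auto). lra. }
    split; lra.
  - rewrite Hw0. split; lra. }
assert (HVnn : forall k, 0 <= V k).
{ intros k. apply rsum_nonneg. intros j Hj. apply Hphi_w; auto. }
assert (HD2 : forall k, D2 N (p k) + D2 N (v k) <= K * V k).
{ intros k. rewrite <- !HW, <- rsum_plus. unfold V. rewrite <- rsum_scal_l. apply rsum_le.
  intros j Hj. apply Hphi_w; auto. }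
assert (Hstep : forall k, V (S k) <= (1 - th/2) * V k).
{ intros k.
  assert (H1 : V (S k) <= (1 - th) * V k + B * rsum N (fun i => Dk k i * Dk k i)).
  { rewrite <- (Hpar' (Dk k)).
    unfold V. rewrite <- !rsum_scal_l, <- rsum_plus. apply rsum_le. intros j Hj.
    rewrite Hcp, Hcv by auto.
    destruct (Hw j Hj) as [[Hw1 [HG _]]|[Hw0 _]].
    - rewrite Hw1. destruct (Hqth j Hj HG) as [_ H2].
      specialize (H2 (cf f N j (p k)) (cf f N j (v k)) (cf f N j (Dk k))). fold B in H2.
      lra.
    - rewrite Hw0. assert (0 <= B * (cf f N j (Dk k) * cf f N j (Dk k))).
      { apply Rmult_le_pos; [unfold B; apply Rlt_le, Rdiv_lt_0_compat; lra | apply Rle_0_sqr]. }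
      lra. }
  assert (H2 : rsum N (fun i => Dk k i * Dk k i) <= 4 * INR N * INR N * (dA*dA) * D2 N (r k)).
  { unfold Dk. apply Dbound; [lra|]. intros; apply Hdel; auto. }
  assert (H3 : D2 N (r k) <= 2*(g1*g1)*D2 N (p k) + 2*(g2*g2)*D2 N (v k)) by (unfold r; apply D2_comb).
  assert (H4 := HD2 k).
  assert (HVk := HVnn k).
  assert (Hp0 := D2_nonneg N (p k)). assert (Hv0 := D2_nonneg N (v k)).
  assert (Hg1s : 0 <= g1*g1) by apply Rle_0_sqr. assert (Hg2s : 0 <= g2*g2) by apply Rle_0_sqr.
  assert (S1 : D2 N (r k) <= 2*(g1*g1+g2*g2)*(D2 N (p k) + D2 N (v k))).
  { assert (0 <= g1*g1*D2 N (v k)) by (apply Rmult_le_pos; auto).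
    assert (0 <= g2*g2*D2 N (p k)) by (apply Rmult_le_pos; auto). lra. }
  assert (S2 : 2*(g1*g1+g2*g2)*(D2 N (p k) + D2 N (v k)) <= 2*(g1*g1+g2*g2)*(K * V k))
    by (apply Rmult_le_compat_l; lra).
  assert (HNN : 0 <= INR N * INR N) by (apply Rmult_le_pos; apply pos_INR).
  assert (Hc4 : 0 <= 4 * INR N * INR N * (dA*dA)).
  { assert (0 <= dA*dA) by apply Rle_0_sqr.
    replace (4 * INR N * INR N * (dA*dA)) with (4 * (INR N * INR N) * (dA*dA)) by ring.
    apply Rmult_le_pos; lra. }
  assert (S3 : 4 * INR N * INR N * (dA*dA) * D2 N (r k)
             <= 4 * INR N * INR N * (dA*dA) * (2*(g1*g1+g2*g2)*(K * V k)))
    by (apply Rmult_le_compat_l; lra).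
  assert (HB : 0 <= B) by (unfold B; apply Rlt_le, Rdiv_lt_0_compat; lra).
  assert (S4 : B * rsum N (fun i => Dk k i * Dk k i) <= B * (4 * INR N * INR N * (dA*dA) * (2*(g1*g1+g2*g2)*(K * V k))))
    by (apply Rmult_le_compat_l; lra).
  assert (E : B * (4 * INR N * INR N * (dA*dA) * (2*(g1*g1+g2*g2)*(K * V k))) = / 2 * (16 * Z * (dA*dA)) * V k)
    by (unfold Z; field).
  assert (S5 : / 2 * (16 * Z * (dA*dA)) * V k <= / 2 * th * V k).
  { apply Rmult_le_compat_r; auto. lra. }
  lra. }
assert (Hgeo : forall k, V k <= (1 - th/2) ^ k * V 0%nat).
{ induction k; simpl; [lra|]. eapply Rle_trans; [apply Hstep|]. rewrite Rmult_assoc.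
  apply Rmult_le_compat_l; [lra|auto]. }
assert (Hfin : forall x : nat -> nat -> R, (forall k, D2 N (x k) <= K * V k) ->
   Un_cv (fun k => x k i0 - x k j0) 0).
{ intros x Hx. apply (geo_conv _ (4*K) (1 - th/2) (V 0%nat)); [lra|lra|apply HVnn|].
  intros k.
  set (m0 := mean N (x k)).
  assert (Ht : forall i, (i < N)%nat -> (x k i - m0) * (x k i - m0) <= D2 N (x k)).
  { intros i Hi. unfold D2. fold m0.
    apply (rsum_term_le N (fun i => (x k i - m0) * (x k i - m0))); auto. intros; apply Rle_0_sqr. }
  assert (Ha1 := Ht i0 Hi0). assert (Ha2 := Ht j0 Hj0).
  assert (0 <= (x k i0 - m0 + (x k j0 - m0)) * (x k i0 - m0 + (x k j0 - m0))) by apply Rle_0_sqr.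
  assert ((x k i0 - x k j0) * (x k i0 - x k j0) <= 4 * D2 N (x k)) by lra.
  specialize (Hx k). specialize (Hgeo k).
  assert (K * V k <= K * ((1 - th / 2) ^ k * V 0%nat)) by (apply Rmult_le_compat_l; lra).
  lra. }
split; apply Hfin; intros k; specialize (HD2 k);
  assert (0 <= D2 N (p k)) by apply D2_nonneg; assert (0 <= D2 N (v k)) by apply D2_nonneg; lra.
Qed.
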